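(* There is an absolute constant $\delta_0>0$ such that the following holds. Let $0<\delta_1<\delta_0$ and $0<\delta_2<\delta_1^3$ with $\delta_1/\delta_2\in\mathbb{N}$, and let $m\in\mathbb{N}\cup\{\infty\}$. Partition $\mathbb{C}/\mathbb{Z}[i]$ into finitely many sets each of diameter at most $\delta_2$, and color each $x=(a_1,a_2,\dots)\in\ell^1(\mathbb{N}_{\le m};\mathbb{R}/\mathbb{Z})$ by the part containing $F(x)=\sum_{j}(e(a_j)-1)\bmod\mathbb{Z}[i]$. Then for all $x,s\in\ell^1(\mathbb{N}_{\le m};\mathbb{R}/\mathbb{Z})$ with $s\in S_m$, the elements $x$, $x+s$, $x+2s$ do not all receive the same color.
   Context: $\|x\|_{\mathbb{R}/\mathbb{Z}}$ is the distance from $x$ to the nearest integer; $e(x)=e^{2\pi i x}$ for $x\in\mathbb{R}/\mathbb{Z}$. For $m\in\mathbb{N}$, $\ell^1(\mathbb{N}_{\le m};\mathbb{R}/\mathbb{Z})$ is $(\mathbb{R}/\mathbb{Z})^m$ with norm $\sum_{i\le m}\|a_i\|_{\mathbb{R}/\mathbb{Z}}$; for $m=\infty$ it is the group $\ell^1(\mathbb{N};\mathbb{R}/\mathbb{Z})$ of sequences in $\mathbb{R}/\mathbb{Z}$ with $\sum_i\|a_i\|_{\mathbb{R}/\mathbb{Z}}<\infty$ (so the sum defining $F$ converges since $|e(a)-1|\le 2\pi\|a\|_{\mathbb{R}/\mathbb{Z}}$). Diameters in $\mathbb{C}/\mathbb{Z}[i]$ are with respect to the quotient metric. Let $\eta_m=2^{-100m}$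 for $m\in\mathbb{N}$ and $\eta_\infty=0$. $S_m$ is the set of $(a_1,a_2,\dots)\in\ell^1(\mathbb{N}_{\le m};\mathbb{R}/\mathbb{Z})$ for which there is an index $i$ with: (1) $a_i\in(-\delta_1-(2-\eta_m)\delta_2,\,-\delta_1+(2-\eta_m)\delta_2)\subset\mathbb{R}/\mathbb{Z}$; (2) for all $j\ne i$, $a_j\in(-(2-\eta_m)\delta_2,(2-\eta_m)\delta_2)\subset\mathbb{R}/\mathbb{Z}$; (3) $\delta_1-(2-\eta_m)\delta_2<\sum_{j\ne i}\|a_j\|_{\mathbb{R}/\mathbb{Z}}<\delta_1+(2-\eta_m)\delta_2$. *)

(* Defs.v *)
From Stdlib Require Import Reals Lra Lia ZArith.
From Coquelicot Require Import Coquelicot.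
Open Scope R_scope.

Definition nrmRZ (x : R) : R := Rmin (frac_part x) (1 - frac_part x).

(* Membership of (the class of) a in the image in R/Z of the real interval (u,v). *)
Definition inRZinterval (a u v : R) : Prop :=
  exists k : Z, u < a + IZR k < v.

(* m in N ∪ {∞}: [Some n] is n, [None] is ∞.  Coordinates are indexed by
   0,1,2,... ; index j is a genuine coordinate iff j < m. *)
Definition in_range (m : option nat) (j : nat) : Prop :=
  match m with Some n => (j < n)%nat | None => True end.

(* An element of l^1(N_{<=m}; R/Z), given by real representatives of its
   coordinates (coordinates beyond m are set to 0), with sum ||a_j|| < ∞. *)
Definition in_l1 (m : option nat) (a : nat -> R) : Prop :=
  (forall j, ~ in_range m j -> a j = 0) /\ ex_series (fun j => nrmRZ (a j)).

Definition eta (m : option nat) : R :=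
  match m with Some n => / (2 ^ (100 * n)) | None => 0 end.

Definition in_S (m : option nat) (d1 d2 : R) (a : nat -> R) : Prop :=
  let r := (2 - eta m) * d2 in
  exists i : nat, in_range m i /\
    inRZinterval (a i) (- d1 - r) (- d1 + r) /\
    (forall j, in_range m j -> j <> i -> inRZinterval (a j) (- r) r) /\
    d1 - r < Series (fun j => if Nat.eqb j i then 0 else nrmRZ (a j)) < d1 + r.

(* F(x) = sum_j (e(a_j) - 1) in C, written as (real part, imaginary part). *)
Definition F_re (a : nat -> R) : R := Series (fun j => cos (2 * PI * a j) - 1).
Definition F_im (a : nat -> R) : R := Series (fun j => sin (2 * PI * a j)).

(* Quotient metric on C/Z[i] = inf_{λ∈Z[i]} |z - w - λ|, computed coordinatewise. *)
Definition distCZ (x1 y1 x2 y2 : R) : R :=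
  sqrt (nrmRZ (x1 - x2) ^ 2 + nrmRZ (y1 - y2) ^ 2).

Definition seq_add (a b : nat -> R) : nat -> R := fun j => a j + b j.
Definition seq_scale (k : R) (a : nat -> R) : nat -> R := fun j => k * a j.

(* Main.v *)
Require Import Defs.
From Stdlib Require Import Reals ZArith Lra Lia Classical.
From Coquelicot Require Import Coquelicot.
Open Scope R_scope.

Lemma PI_bnd : 3 < PI <= 4.
Proof. pose proof PI2_3_2; pose proof PI_4; lra. Qed.

Lemma IZR_cases (n : Z) : 0 <= IZR n \/ IZR n <= -1.
Proof. destruct (Z_le_gt_dec 0 n) as [h|h]; [left; apply IZR_le; lia | right; apply IZR_le; lia]. Qed.

Lemma nrm_rep a : exists k : Z, Rabs (a + IZR k) = nrmRZ a.
Proof.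
  unfold nrmRZ. pose proof (base_fp a) as [h1 h2].
  unfold frac_part in *.
  destruct (Rle_dec (a - IZR (Int_part a)) (1 - (a - IZR (Int_part a)))) as [h|h].
  - exists (- Int_part a)%Z. rewrite Rmin_left by lra. rewrite opp_IZR. rewrite Rabs_right; lra.
  - exists (- Int_part a - 1)%Z. rewrite Rmin_right by lra. rewrite minus_IZR, opp_IZR. rewrite Rabs_left1; lra.
Qed.

Lemma nrm_min a k : nrmRZ a <= Rabs (a + IZR k).
Proof.
  unfold nrmRZ. pose proof (base_fp a) as [h1 h2]. unfold frac_part in *.
  set (I := Int_part a) in *.
  destruct (IZR_cases (I + k)) as [h|h]; rewrite plus_IZR in h.
  - eapply Rle_trans; [apply Rmin_l|]. rewrite Rabs_right; lra.
  - eapply Rle_trans; [apply Rmin_r|]. rewrite Rabs_left1; lra.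
Qed.

Lemma nrm_bnd a : 0 <= nrmRZ a <= 1/2.
Proof. unfold nrmRZ. pose proof (base_fp a). unfold Rmin; destruct Rle_dec; lra. Qed.

Lemma nrm_0 : nrmRZ 0 = 0.
Proof. pose proof (nrm_min 0 0) as h. pose proof (nrm_bnd 0).
  rewrite Rplus_0_r, Rabs_R0 in h; lra. Qed.

Lemma nrm_add a b : nrmRZ (a+b) <= nrmRZ a + nrmRZ b.
Proof.
  destruct (nrm_rep a) as [k hk]; destruct (nrm_rep b) as [l hl].
  pose proof (nrm_min (a+b) (k+l)) as H. rewrite plus_IZR in H.
  rewrite <- hk, <- hl. eapply Rle_trans; [exact H|].
  replace (a + b + (IZR k + IZR l)) with ((a + IZR k) + (b + IZR l)) by ring. apply Rabs_triang.
Qed.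

Lemma cos_Z x k : cos (x + 2 * IZR k * PI) = cos x.
Proof.
  destruct k as [|p|p].
  - f_equal. simpl. ring.
  - rewrite <- (positive_nat_Z p), <- INR_IZR_INZ. apply cos_period.
  - replace x with ((x + 2 * IZR (Zneg p) * PI) + 2 * INR (Pos.to_nat p) * PI) at 2.
    + symmetry; apply cos_period.
    + rewrite INR_IZR_INZ, positive_nat_Z. rewrite <- Pos2Z.opp_pos, opp_IZR. ring.
Qed.

Lemma sin_Z x k : sin (x + 2 * IZR k * PI) = sin x.
Proof.
  destruct k as [|p|p].
  - f_equal. simpl. ring.
  - rewrite <- (positive_nat_Z p), <- INR_IZR_INZ. apply sin_period.
  - replace x with ((x + 2 * IZR (Zneg p) * PI) + 2 * INR (Pos.to_nat p) * PI) at 2.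
    + symmetry; apply sin_period.
    + rewrite INR_IZR_INZ, positive_nat_Z. rewrite <- Pos2Z.opp_pos, opp_IZR. ring.
Qed.

Lemma abs_sin_pos y : 0 <= y -> Rabs (sin y) <= y.
Proof. intros h. destruct (Req_dec y 0) as [->|hn]. rewrite sin_0, Rabs_R0; lra.
  assert (sin y < y) by (apply sin_lt_x; lra).
  destruct (Rle_dec y PI).
  - rewrite Rabs_right. lra. apply Rle_ge, sin_ge_0; lra.
  - pose proof (SIN_bound y); pose proof PI_bnd. apply Rabs_le; lra.
Qed.

Lemma abs_sin_le y : Rabs (sin y) <= Rabs y.
Proof.
  destruct (Rle_dec 0 y) as [hy|hy]. rewrite (Rabs_right y) by lra; apply abs_sin_pos; lra.
  apply Rnot_le_lt in hy.
  rewrite (Rabs_left y) by lra. replace (sin y) with (- sin (-y)) by (rewrite sin_neg; ring).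
  rewrite Rabs_Ropp. apply abs_sin_pos; lra.
Qed.

Lemma sin2_half y : sin y ^ 2 = (1 - cos (2 * y)) / 2.
Proof. rewrite cos_2a_sin. field. Qed.

Lemma sin2_Z a k : sin (PI * (a + IZR k)) ^ 2 = sin (PI * a) ^ 2.
Proof. rewrite !sin2_half.
  replace (2 * (PI * (a + IZR k))) with (2 * (PI * a) + 2 * IZR k * PI) by ring.
  rewrite cos_Z. reflexivity. Qed.

Lemma sin2pi_Z a k : sin (2 * PI * (a + IZR k)) = sin (2 * PI * a).
Proof. replace (2 * PI * (a + IZR k)) with (2 * PI * a + 2 * IZR k * PI) by ring. apply sin_Z. Qed.


Lemma bnd_sin2 a : sin (PI * a) ^ 2 <= PI^2 * nrmRZ a ^ 2.
Proof.
  destruct (nrm_rep a) as [k hk]. rewrite <- (sin2_Z a k), <- hk.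
  pose proof (abs_sin_le (PI * (a + IZR k))) as H.
  pose proof PI_bnd.
  rewrite Rabs_mult, (Rabs_right PI) in H by lra.
  rewrite <- pow2_abs. pose proof (Rabs_pos (sin (PI * (a + IZR k)))).
  pose proof (Rabs_pos (a + IZR k)).
  replace (PI ^ 2 * Rabs (a + IZR k) ^ 2) with ((PI * Rabs (a + IZR k)) ^ 2) by ring.
  apply pow_incr; lra.
Qed.

Lemma bnd_sin a : Rabs (sin (2 * PI * a)) <= 2 * PI * nrmRZ a.
Proof.
  destruct (nrm_rep a) as [k hk]. rewrite <- (sin2pi_Z a k), <- hk.
  pose proof (abs_sin_le (2 * PI * (a + IZR k))) as H. pose proof PI_bnd.
  rewrite Rabs_mult, (Rabs_right (2 * PI)) in H by lra. exact H.
Qed.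

Lemma cos_m1 a : cos (2 * PI * a) - 1 = -2 * sin (PI * a) ^ 2.
Proof. replace (2 * PI * a) with (2 * (PI * a)) by ring. rewrite cos_2a_sin. ring. Qed.

Lemma bnd_cos a : Rabs (cos (2 * PI * a) - 1) <= PI ^ 2 * nrmRZ a.
Proof.
  rewrite cos_m1. pose proof (bnd_sin2 a). pose proof (nrm_bnd a). pose proof PI_bnd.
  pose proof (pow2_ge_0 (sin (PI * a))).
  assert (nrmRZ a ^ 2 <= nrmRZ a / 2) by nra.
  assert (PI ^ 2 * nrmRZ a ^ 2 <= PI ^ 2 * (nrmRZ a / 2)).
  { apply Rmult_le_compat_l; [apply pow2_ge_0|lra]. }
  rewrite Rabs_left1 by lra. lra.
Qed.

Lemma sin_lower a : 0 <= a <= 1 -> a - a ^ 3 / 6 <= sin a.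
Proof. intros h. pose proof PI_bnd. destruct (sin_bound a 0) as [h1 _]; try lra.
  unfold sin_approx, sin_term in h1. simpl in h1. lra. Qed.

Lemma exR_le (a b : nat -> R) : (forall n, Rabs (a n) <= b n) -> ex_series b -> ex_series a.
Proof. intros h hb. apply (ex_series_le a b); [intro n; exact (h n) | exact hb]. Qed.

Lemma exR_plus (a b : nat -> R) : ex_series a -> ex_series b -> ex_series (fun n => a n + b n).
Proof. intros. exact (ex_series_plus a b H H0). Qed.

Lemma exR_minus (a b : nat -> R) : ex_series a -> ex_series b -> ex_series (fun n => a n - b n).
Proof. intros. exact (ex_series_minus a b H H0). Qed.

Lemma exR_scal c (a : nat -> R) : ex_series a -> ex_series (fun n => c * a n).
Proof. intros. exact (ex_series_scal_l c a H). Qed.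

Lemma ex0 : ex_series (fun _ : nat => 0).
Proof. exists 0. unfold is_series. apply filterlim_ext with (fun _ => 0).
  intros n. rewrite sum_n_const. simpl. ring. apply filterlim_const. Qed.

Lemma ser0 : Series (fun _ : nat => 0) = 0.
Proof. pose proof (Series_scal_l 0 (fun _ => 0)) as h. cbv beta in h.
  transitivity (Series (fun n:nat => 0 * 0)). apply Series_ext; intros; ring. rewrite h; ring. Qed.

Lemma ser_le (a b : nat -> R) : (forall n, a n <= b n) -> ex_series a -> ex_series b ->
  Series a <= Series b.
Proof. intros h ha hb.
  pose proof (Series_le (fun _ => 0) (fun n => b n - a n)) as H.
  rewrite ser0, Series_minus in H; auto.
  assert (0 <= Series b - Series a). apply H. intros n; specialize (h n); lra.
  apply exR_minus; auto. lra. Qed.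

Lemma ser_abs_le (a b : nat -> R) : (forall n, Rabs (a n) <= b n) -> ex_series b ->
  Rabs (Series a) <= Series b.
Proof. intros h hb. assert (ha : ex_series a) by (eapply exR_le; eauto).
  apply Rabs_le. split.
  - assert (hnb: ex_series (fun n => - b n)).
    { apply (ex_series_ext (fun n => -1 * b n)). intros; simpl; ring. apply exR_scal; auto. }
    assert (hs : Series (fun n => - b n) = - Series b).
    { rewrite (Series_ext (fun n => - b n) (fun n => -1 * b n)) by (intros; ring).
      rewrite Series_scal_l. ring. }
    rewrite <- hs. apply ser_le; auto. intros n; specialize (h n). apply Rabs_le_between in h; lra.
  - apply ser_le; auto. intros n; specialize (h n). apply Rabs_le_between in h; lra.
Qed.

Lemma sum_bump (f : nat -> R) i : sum_f_R0 (fun j => if Nat.eqb j i then f i else 0) i = f i.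
Proof. destruct i as [|i]. simpl. reflexivity.
  rewrite tech5. rewrite sum_eq_R0. rewrite Nat.eqb_refl. ring.
  intros n hn. destruct (Nat.eqb_spec n (S i)); [lia|auto]. Qed.

Lemma split_ser (f : nat -> R) i : ex_series f ->
  ex_series (fun j => if Nat.eqb j i then 0 else f j) /\
  Series f = f i + Series (fun j => if Nat.eqb j i then 0 else f j).
Proof.
  intros hf.
  set (b := fun j => if Nat.eqb j i then f i else 0).
  assert (hbt : forall k, b (S i + k)%nat = 0).
  { intros k; unfold b. destruct (Nat.eqb_spec (S i + k) i); [lia|reflexivity]. }
  assert (hb : ex_series b).
  { apply (proj2 (ex_series_incr_n b (S i))). apply (ex_series_ext (fun _ => 0)).
    intros; rewrite hbt; auto. apply ex0. }
  assert (hsb : Series b = f i).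
  { rewrite (Series_incr_n b (S i)) by (auto; lia). simpl pred.
    rewrite (Series_ext _ (fun _ => 0)) by apply hbt. rewrite ser0.
    unfold b. rewrite sum_bump. ring. }
  assert (he : forall j, (if Nat.eqb j i then 0 else f j) = f j - b j).
  { intros j; unfold b. destruct (Nat.eqb_spec j i); [subst; ring| ring]. }
  split.
  - apply (ex_series_ext (fun j => f j - b j)). intros; rewrite he; auto. apply exR_minus; auto.
  - rewrite (Series_ext (fun j => if Nat.eqb j i then 0 else f j) (fun j => f j - b j)) by apply he. rewrite Series_minus; auto. lra.
Qed.

Lemma dist_re u v u' v' : nrmRZ (u - u') <= distCZ u v u' v'.
Proof. unfold distCZ. rewrite <- (sqrt_pow2 (nrmRZ (u - u'))) at 1 by apply nrm_bnd.
  apply sqrt_le_1_alt. pose proof (pow2_ge_0 (nrmRZ (v - v'))). lra. Qed.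

Lemma dist_im u v u' v' : nrmRZ (v - v') <= distCZ u v u' v'.
Proof. unfold distCZ. rewrite <- (sqrt_pow2 (nrmRZ (v - v'))) at 1 by apply nrm_bnd.
  apply sqrt_le_1_alt. pose proof (pow2_ge_0 (nrmRZ (u - u'))). lra. Qed.

Lemma near_int a d : nrmRZ a <= d -> exists n : Z, Rabs (a - IZR n) <= d.
Proof. intros h. destruct (nrm_rep a) as [k hk]. exists (- k)%Z.
  rewrite opp_IZR. replace (a - - IZR k) with (a + IZR k) by ring. lra. Qed.

Lemma int_trick (D a1 a2 d T : R) (n1 n2 : Z) : D = 2 * a1 - a2 ->
  Rabs (a1 - IZR n1) <= d -> Rabs (a2 - IZR n2) <= d -> Rabs D <= T -> T + 3 * d < 1 ->
  Rabs D <= 3 * d.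
Proof. intros hD h1 h2 hT hd.
  apply Rabs_le_between in h1, h2, hT.
  assert (hz : (2 * n1 - n2)%Z = 0%Z).
  { assert (hlo : -1 < IZR (2 * n1 - n2)) by (rewrite minus_IZR, mult_IZR; simpl; lra).
    assert (hhi : IZR (2 * n1 - n2) < 1) by (rewrite minus_IZR, mult_IZR; simpl; lra).
    apply lt_IZR in hlo, hhi. lia. }
  assert (hz' : IZR (2 * n1 - n2) = 0) by (rewrite hz; reflexivity).
  rewrite minus_IZR, mult_IZR in hz'. simpl in hz'.
  apply Rabs_le. lra. Qed.

Lemma eta_bnd m : 0 <= eta m <= 1.
Proof. destruct m as [n|]; unfold eta; [|lra].
  pose proof (pow_R1_Rle 2 (100 * n)) as h. assert (1 <= 2) as h2 by lra. specialize (h h2).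
  split. left; apply Rinv_0_lt_compat; lra.
  rewrite <- Rinv_1. apply Rinv_le_contravar; lra. Qed.

Lemma ex_cos (a : nat -> R) : ex_series (fun j => nrmRZ (a j)) ->
  ex_series (fun j => cos (2 * PI * a j) - 1).
Proof. intros h. apply exR_le with (fun j => PI ^ 2 * nrmRZ (a j)).
  intros; apply bnd_cos. apply exR_scal; auto. Qed.

Lemma ex_sin (a : nat -> R) : ex_series (fun j => nrmRZ (a j)) ->
  ex_series (fun j => sin (2 * PI * a j)).
Proof. intros h. apply exR_le with (fun j => (2 * PI) * nrmRZ (a j)).
  intros; apply bnd_sin. apply exR_scal; auto. Qed.

Lemma ex_nrm_add (a b : nat -> R) : ex_series (fun j => nrmRZ (a j)) -> ex_series (fun j => nrmRZ (b j)) ->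
  ex_series (fun j => nrmRZ (a j + b j)).
Proof. intros ha hb. apply exR_le with (fun j => nrmRZ (a j) + nrmRZ (b j)).
  intros j. rewrite Rabs_right by (apply Rle_ge, nrm_bnd). apply nrm_add.
  apply exR_plus; auto. Qed.

Lemma idre a b : (cos (2 * PI * a) - 1) - 2 * (cos (2 * PI * (a + b)) - 1) + (cos (2 * PI * (a + 2 * b)) - 1)
  = -4 * sin (PI * b) ^ 2 * cos (2 * PI * (a + b)).
Proof.
  replace (2 * PI * a) with (2 * PI * (a + b) - 2 * (PI * b)) by ring.
  replace (2 * PI * (a + 2 * b)) with (2 * PI * (a + b) + 2 * (PI * b)) by ring.
  rewrite cos_minus, cos_plus, cos_2a_sin. ring. Qed.

Lemma idim a b : sin (2 * PI * a) - 2 * sin (2 * PI * (a + b)) + sin (2 * PI * (a + 2 * b))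
  = -4 * sin (PI * b) ^ 2 * sin (2 * PI * (a + b)).
Proof.
  replace (2 * PI * a) with (2 * PI * (a + b) - 2 * (PI * b)) by ring.
  replace (2 * PI * (a + 2 * b)) with (2 * PI * (a + b) + 2 * (PI * b)) by ring.
  rewrite sin_minus, sin_plus, cos_2a_sin. ring. Qed.

Lemma bnd_term (b c : R) : Rabs c <= 1 -> Rabs (-4 * sin (PI * b) ^ 2 * c) <= 2 * PI ^ 2 * nrmRZ b.
Proof. intros hc. pose proof (bnd_sin2 b). pose proof (nrm_bnd b). pose proof PI_bnd.
  pose proof (pow2_ge_0 (sin (PI * b))).
  assert (nrmRZ b ^ 2 <= nrmRZ b / 2) by nra.
  assert (PI ^ 2 * nrmRZ b ^ 2 <= PI ^ 2 * (nrmRZ b / 2)).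
  { apply Rmult_le_compat_l; [apply pow2_ge_0|lra]. }
  set (S := sin (PI * b) ^ 2) in *.
  rewrite !Rabs_mult. rewrite (Rabs_left (-4)) by lra. rewrite (Rabs_right S) by lra.
  assert (S * Rabs c <= S * 1) by (apply Rmult_le_compat_l; lra).
  lra. Qed.

Lemma ser_comb (a0 a1 a2 : nat -> R) : ex_series a0 -> ex_series a1 -> ex_series a2 ->
  Series a0 - 2 * Series a1 + Series a2 = Series (fun j => a0 j - 2 * a1 j + a2 j).
Proof. intros h0 h1 h2.
  rewrite (Series_plus (fun j => a0 j - 2 * a1 j) a2).
  rewrite (Series_minus a0 (fun j => 2 * a1 j)). rewrite (Series_scal_l 2 a1). ring.
  auto. apply exR_scal; auto. apply exR_minus; auto; apply exR_scal; auto. auto. Qed.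

Lemma term_le b c r : Rabs c <= 1 -> nrmRZ b <= r ->
  -4 * sin (PI * b) ^ 2 * c <= 4 * PI ^ 2 * r * nrmRZ b.
Proof. intros hc hb. pose proof (bnd_sin2 b). pose proof (nrm_bnd b). pose proof PI_bnd.
  set (S := sin (PI * b) ^ 2) in *. assert (0 <= S) by (apply pow2_ge_0).
  apply Rabs_le_between in hc.
  assert (-4 * S * c <= 4 * S) by nra.
  assert (nrmRZ b ^ 2 <= r * nrmRZ b) by nra.
  assert (PI ^ 2 * nrmRZ b ^ 2 <= PI ^ 2 * (r * nrmRZ b)).
  { apply Rmult_le_compat_l; [apply pow2_ge_0|lra]. }
  lra. Qed.

Lemma final_arith d1 d2 r t S P :
  0 < d1 < 1/100 -> 0 < d2 < d1 ^ 3 -> d2 <= r <= 2 * d2 -> d1 - r < t < d1 + r ->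
  3 < P <= 4 -> P * t - (P * t) ^ 3 / 6 <= S -> 4 * S ^ 2 <= 6 * d2 + 4 * P ^ 2 * r * (d1 + r) -> False.
Proof. intros [h1 h2] [h3 h4] [h5 h6] [h7 h8] [h9 h10] hS hF.
  assert (hd3 : d1 ^ 3 <= d1 * d1 * (1/100)) by (simpl; nra).
  assert (hr : r <= d1 * d1 * (1/50)) by nra.
  assert (hr2 : r <= d1 * (1/5000)) by nra.
  assert (ht : d1 * (9/10) <= t) by nra.
  assert (ht2 : t <= d1 * (11/10)) by nra.
  set (u := P * t) in *.
  assert (hu : 0 < u) by (unfold u; nra).
  assert (hu2 : u <= 1/20) by (unfold u; nra).
  assert (hu3 : u ^ 3 / 6 <= u * (1/100)) by (simpl; nra).
  assert (hS1 : u * (99/100) <= S) by lra.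
  assert (hS2 : (u * (99/100)) ^ 2 <= S ^ 2) by (apply pow_incr; lra).
  assert (hu4 : 3 * d1 * (9/10) <= u) by (unfold u; nra).
  assert (hS3 : (3 * d1 * (9/10) * (99/100)) ^ 2 <= S ^ 2).
  { eapply Rle_trans; [|exact hS2]. apply pow_incr; nra. }
  assert (hP2 : P ^ 2 <= 16) by nra.
  assert (hR : 4 * P ^ 2 * r * (d1 + r) <= 64 * r * (d1 + r)).
  { assert (0 <= r * (d1 + r)) by nra. nra. }
  assert (hR2 : 64 * r * (d1 + r) <= 64 * (d1 * d1 * (1/50)) * (d1 * 2)) by nra.
  assert (hR3 : 6 * d2 <= 6 * (d1 * d1 * (1/100))) by nra.
  nra. Qed.

Theorem mainTheorem4 :
  exists delta0 : R, 0 < delta0 /\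
  forall (d1 d2 : R),
    0 < d1 < delta0 ->
    0 < d2 < d1 ^ 3 ->
    (exists n : nat, d1 / d2 = INR n) ->
    forall (m : option nat)
      (col : R -> R -> nat),
      (* finitely many parts *)
      (exists K : nat, forall u v, (col u v < K)%nat) ->
      (* col is a function on C/Z[i] *)
      (forall (u v : R) (p q : Z), col (u + IZR p) (v + IZR q) = col u v) ->
      (* each part has diameter at most d2 *)
      (forall u v u' v', col u v = col u' v' -> distCZ u v u' v' <= d2) ->
      forall x s : nat -> R,
        in_l1 m x -> in_l1 m s -> in_S m d1 d2 s ->
        ~ (col (F_re x) (F_im x) = col (F_re (seq_add x s)) (F_im (seq_add x s)) /\
           col (F_re x) (F_im x) =
             col (F_re (seq_add x (seq_scale 2 s))) (F_im (seq_add x (seq_scale 2 s)))).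
Proof.
  exists (1/100). split; [lra|].
  intros d1 d2 [hd1a hd1b] [hd2a hd2b] _ m col _ _ hdiam x s hx hs hS [hc1 hc2].
  apply hdiam in hc1. apply hdiam in hc2.
  pose proof (Rle_trans _ _ _ (dist_re _ _ _ _) hc1) as hr1.
  pose proof (Rle_trans _ _ _ (dist_im _ _ _ _) hc1) as hi1.
  pose proof (Rle_trans _ _ _ (dist_re _ _ _ _) hc2) as hr2.
  pose proof (Rle_trans _ _ _ (dist_im _ _ _ _) hc2) as hi2.
  apply near_int in hr1 as [nr1 hr1]. apply near_int in hi1 as [ni1 hi1].
  apply near_int in hr2 as [nr2 hr2]. apply near_int in hi2 as [ni2 hi2].
  unfold in_S in hS; cbv zeta in hS.
  destruct hS as [i [_ [hi [hj hsum]]]].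
  set (r := (2 - eta m) * d2) in *.
  assert (hr : d2 <= r <= 2 * d2) by (pose proof (eta_bnd m); unfold r; nra).
  destruct hx as [_ hxs]. destruct hs as [hs0 hss].
  pose proof PI_bnd as hPI.
  destruct (split_ser (fun j => nrmRZ (s j)) i hss) as [hnu' hnusplit].
  destruct hi as [k hk].
  assert (hnui : nrmRZ (s i) < d1 + r).
  { pose proof (nrm_min (s i) k). apply Rabs_def2 in H0 || idtac.
    assert (Rabs (s i + IZR k) < d1 + r) by (apply Rabs_def1; lra). lra. }
  assert (hnu : Series (fun j => nrmRZ (s j)) <= 2 * (d1 + r)) by lra.
  assert (hnuj : forall j, j <> i -> nrmRZ (s j) <= r).
  { intros j hne. destruct (classic (in_range m j)) as [hin|hout].
    - destruct (hj j hin hne) as [kj hkj]. pose proof (nrm_min (s j) kj).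
      assert (Rabs (s j + IZR kj) < r) by (apply Rabs_def1; lra). lra.
    - rewrite (hs0 j hout), nrm_0. lra. }
  assert (ex2s : ex_series (fun j => nrmRZ (x j + 2 * s j))).
  { apply (ex_series_ext (fun j => nrmRZ (x j + (s j + s j)))).
    intros; simpl; f_equal; ring.
    apply ex_nrm_add; auto. apply ex_nrm_add; auto. }
  assert (ex1s : ex_series (fun j => nrmRZ (x j + s j))) by (apply ex_nrm_add; auto).
  assert (ec0 : ex_series (fun j => cos (2 * PI * x j) - 1)) by (apply ex_cos; auto).
  assert (ec1 : ex_series (fun j => cos (2 * PI * (x j + s j)) - 1))
    by (apply (ex_cos (fun j => x j + s j)); auto).
  assert (ec2 : ex_series (fun j => cos (2 * PI * (x j + 2 * s j)) - 1))
    by (apply (ex_cos (fun j => x j + 2 * s j)); auto).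
  assert (es0 : ex_series (fun j => sin (2 * PI * x j))) by (apply ex_sin; auto).
  assert (es1 : ex_series (fun j => sin (2 * PI * (x j + s j))))
    by (apply (ex_sin (fun j => x j + s j)); auto).
  assert (es2 : ex_series (fun j => sin (2 * PI * (x j + 2 * s j))))
    by (apply (ex_sin (fun j => x j + 2 * s j)); auto).
  set (Dre := fun j => -4 * sin (PI * s j) ^ 2 * cos (2 * PI * (x j + s j))).
  set (Dim := fun j => -4 * sin (PI * s j) ^ 2 * sin (2 * PI * (x j + s j))).
  assert (hB : ex_series (fun j => 2 * PI ^ 2 * nrmRZ (s j))) by (apply exR_scal; auto).
  assert (hDre_b : forall j, Rabs (Dre j) <= 2 * PI ^ 2 * nrmRZ (s j)).
  { intros j; unfold Dre; apply bnd_term. apply Rabs_le, COS_bound. }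
  assert (hDim_b : forall j, Rabs (Dim j) <= 2 * PI ^ 2 * nrmRZ (s j)).
  { intros j; unfold Dim; apply bnd_term. apply Rabs_le, SIN_bound. }
  assert (eDre : ex_series Dre) by (apply exR_le with (fun j => 2 * PI ^ 2 * nrmRZ (s j)); auto).
  assert (eDim : ex_series Dim) by (apply exR_le with (fun j => 2 * PI ^ 2 * nrmRZ (s j)); auto).
  assert (HDre : F_re x - 2 * F_re (seq_add x s) + F_re (seq_add x (seq_scale 2 s)) = Series Dre).
  { unfold F_re. etransitivity. apply (ser_comb _ _ _ ec0 ec1 ec2).
    apply Series_ext. intros j. unfold Dre. apply idre. }
  assert (HDim : F_im x - 2 * F_im (seq_add x s) + F_im (seq_add x (seq_scale 2 s)) = Series Dim).
  { unfold F_im. etransitivity. apply (ser_comb _ _ _ es0 es1 es2).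
    apply Series_ext. intros j. unfold Dim. apply idim. }
  assert (hT : 2 * PI ^ 2 * (2 * (d1 + r)) + 3 * d2 < 1).
  { assert (PI ^ 2 <= 16) by nra. nra. }
  assert (hSB : Series (fun j => 2 * PI ^ 2 * nrmRZ (s j)) <= 2 * PI ^ 2 * (2 * (d1 + r))).
  { rewrite Series_scal_l. apply Rmult_le_compat_l; [nra|lra]. }
  assert (hDre3 : Rabs (Series Dre) <= 3 * d2).
  { apply (int_trick (Series Dre) (F_re x - F_re (seq_add x s)) (F_re x - F_re (seq_add x (seq_scale 2 s))) d2 (2 * PI ^ 2 * (2 * (d1 + r))) nr1 nr2); [|exact hr1|exact hr2| |exact hT].
    rewrite <- HDre; ring. apply Rle_trans with (Series (fun j => 2*PI^2*nrmRZ (s j))); [apply ser_abs_le; [exact hDre_b|exact hB]|exact hSB]. }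
  assert (hDim3 : Rabs (Series Dim) <= 3 * d2).
  { apply (int_trick (Series Dim) (F_im x - F_im (seq_add x s)) (F_im x - F_im (seq_add x (seq_scale 2 s))) d2 (2 * PI ^ 2 * (2 * (d1 + r))) ni1 ni2); [|exact hi1|exact hi2| |exact hT].
    rewrite <- HDim; ring. apply Rle_trans with (Series (fun j => 2*PI^2*nrmRZ (s j))); [apply ser_abs_le; [exact hDim_b|exact hB]|exact hSB]. }
  set (th := 2 * PI * (x i + s i)).
  set (P := fun j => -4 * sin (PI * s j) ^ 2 * cos (2 * PI * (x j + s j) - th)).
  assert (eP : ex_series P).
  { apply exR_le with (fun j => 2 * PI ^ 2 * nrmRZ (s j)); auto.
    intros j; unfold P; apply bnd_term. apply Rabs_le, COS_bound. }
  assert (HP : Series P = cos th * Series Dre + sin th * Series Dim).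
  { rewrite (Series_ext P (fun j => cos th * Dre j + sin th * Dim j)).
    rewrite (Series_plus (fun j => cos th * Dre j) (fun j => sin th * Dim j)).
    rewrite !Series_scal_l. reflexivity.
    apply exR_scal; auto. apply exR_scal; auto.
    intros j. unfold P, Dre, Dim. rewrite cos_minus. ring. }
  assert (hP6 : Rabs (Series P) <= 6 * d2).
  { rewrite HP. pose proof (COS_bound th). pose proof (SIN_bound th).
    eapply Rle_trans. apply Rabs_triang. rewrite !Rabs_mult.
    assert (Rabs (cos th) <= 1) by (apply Rabs_le; lra).
    assert (Rabs (sin th) <= 1) by (apply Rabs_le; lra).
    pose proof (Rabs_pos (Series Dre)). pose proof (Rabs_pos (Series Dim)).
    pose proof (Rabs_pos (cos th)). pose proof (Rabs_pos (sin th)).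
    nra. }
  destruct (split_ser P i eP) as [eP' hPsplit].
  assert (hPi : P i = -4 * sin (PI * s i) ^ 2).
  { unfold P, th. replace (2 * PI * (x i + s i) - 2 * PI * (x i + s i)) with 0 by ring.
    rewrite cos_0. ring. }
  set (Q := fun j => if Nat.eqb j i then 0 else 4 * PI ^ 2 * r * nrmRZ (s j)).
  assert (eQ : ex_series Q).
  { apply (ex_series_ext (fun j => (4 * PI ^ 2 * r) * (if Nat.eqb j i then 0 else nrmRZ (s j)))).
    intros j; unfold Q; destruct (Nat.eqb j i); simpl; ring. apply exR_scal; auto. }
  assert (hQ : Series Q = 4 * PI ^ 2 * r * Series (fun j => if Nat.eqb j i then 0 else nrmRZ (s j))).
  { rewrite <- Series_scal_l. apply Series_ext. intros j; unfold Q; destruct (Nat.eqb j i); ring. }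
  assert (hPQ : Series (fun j => if Nat.eqb j i then 0 else P j) <= Series Q).
  { apply ser_le; auto. intros j. unfold Q. destruct (Nat.eqb_spec j i). lra.
    unfold P. apply term_le. apply Rabs_le, COS_bound. auto. }
  assert (hQb : Series Q <= 4 * PI ^ 2 * r * (d1 + r)).
  { rewrite hQ. apply Rmult_le_compat_l. assert (0 <= r) by lra. nra. lra. }
  set (t := - (s i + IZR k)).
  assert (hsin : sin (PI * s i) ^ 2 = sin (PI * t) ^ 2).
  { rewrite <- (sin2_Z (s i) k). unfold t. rewrite Ropp_mult_distr_r_reverse, sin_neg. ring. }
  assert (hlow : PI * t - (PI * t) ^ 3 / 6 <= sin (PI * t)).
  { apply sin_lower. unfold t. split. nra.
    assert (d2 <= d1 * d1 * d1) by (simpl in hd2b; nra). nra. }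
  apply (final_arith d1 d2 r t (sin (PI * t)) PI); try lra.
  unfold t; lra.
  rewrite <- hsin. apply Rabs_le_between in hP6. rewrite hPi in hPsplit. lra.
Qed.
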